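(* Let $T=(V,E,w)$ be a tree with positive integer costs. For every decision tree $D$ for $T$ there is an extended strategy function $f$ for $T$ with $\sup\bigcup_{v\in V}f(v)=\mathrm{COST}(D)$, and for every extended strategy function $f$ for $T$ there is a decision tree $D$ for $T$ with $\mathrm{COST}(D)\le \sup\bigcup_{v\in V} f(v)$. Consequently $\mathrm{OPT}(T)=\min_f \sup\bigcup_{v\in V}f(v)$, the minimum over all extended strategy functions $f$ for $T$.
   Context: A decision tree for $T$ is defined recursively: if $|V|=1$ it consists of that single vertex; otherwise one chooses a vertex $q$, and the decision tree is the rooted tree with root $q$ whose children are the roots of decision trees for the connected components of $T-q$. $\mathrm{COST}(D)$ is the maximum over root-to-leaf paths $P$ of $D$ of $\sum_{v\in P}w(v)$, and $\mathrm{OPT}(T)$ is its minimum over decision trees. Intervals are of the form $[a,b)$ with integers $0\le a<b$, and $|[a,b)|=b-a$. For intervals $I=[a,b)$, $I'=[a',b')$ write $I>I'$ (equivalently $I'<I$) iff $a\ge b'$. An extended strategy function for $T$ is a map $f$ assigning to each vertex $v$ an interval $f(v)$ with $|f(v)|\ge w(v)$, such that for any distinct $v_1,v_2$ with $f(v_1)\cap f(v_2)\ne\emptyset$, the path between $v_1$ and $v_2$ contains a vertex $v_3$ with $f(v_3)>f(v_1)$ and $f(v_3)>f(v_2)$. *)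

(* Defs.v *)
From Stdlib Require List.
From mathcomp Require Import all_boot.
Set Implicit Arguments. Unset Strict Implicit. Unset Printing Implicit Defensive.

Section Defs.
Variable T : finType.
Variable e : rel T.

Definition simple_graph := irreflexive e /\ symmetric e.

(* A cycle: x :: p a simple e-path with at least 3 vertices, last adjacent to x *)
Definition acyclic :=
  forall (x : T) (p : seq T), path e x p -> uniq (x :: p) -> 2 <= size p ->
    ~~ e (last x p) x.

Definition is_tree :=
  [/\ simple_graph, 0 < #|T|, (forall x y : T, connect e x y) & acyclic].

Definition induced (A : {set T}) : rel T :=
  fun x y => [&& e x y, x \in A & y \in A].

Definition component (A : {set T}) (x : T) : {set T} :=
  [set y in A | connect (induced A) x y].

Definition components (A : {set T}) : {set {set T}} :=
  [set component A x | x in A].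

Inductive dtree := DNode of T & seq dtree.

Inductive is_dt : {set T} -> dtree -> Prop :=
| IsDt (S : {set T}) (q : T) (cs : seq dtree) (Cs : seq {set T}) :
    q \in S ->
    uniq Cs ->
    [set C in Cs] = components (S :\ q) ->
    List.Forall2 is_dt Cs cs ->
    is_dt S (DNode q cs).

Variable w : T -> nat.

Fixpoint cost (D : dtree) : nat :=
  match D with
  | DNode q cs =>
      w q + (fix maxc (l : seq dtree) : nat :=
               match l with [::] => 0 | c :: l' => maxn (cost c) (maxc l') end) cs
  end.

(* Intervals [a,b) with integers 0 <= a < b, represented as pairs (a,b) *)
Definition interval_ok (I : nat * nat) := I.1 < I.2.
Definition ilen (I : nat * nat) := I.2 - I.1.
Definition igt (I I' : nat * nat) := I'.2 <= I.1.
Definition imeet (I I' : nat * nat) := (maxn I.1 I'.1 < minn I.2 I'.2).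

Definition tpath (v1 v2 : T) (p : seq T) :=
  [/\ path e v1 p, uniq (v1 :: p) & last v1 p = v2].

Definition extended_strategy (f : T -> nat * nat) :=
  (forall v, interval_ok (f v) /\ w v <= ilen (f v)) /\
  (forall v1 v2, v1 != v2 -> imeet (f v1) (f v2) ->
     forall p, tpath v1 v2 p ->
       exists2 v3, v3 \in v1 :: p & igt (f v3) (f v1) /\ igt (f v3) (f v2)).

(* sup of the union of the intervals f(v) (as real intervals [a,b)) *)
Definition fsup (f : T -> nat * nat) : nat := \max_(v : T) (f v).2.

End Defs.

Definition is_min (P : nat -> Prop) (n : nat) := P n /\ forall m, P m -> n <= m.

(* Main.v *)
Require Import Defs.
From mathcomp Require Import all_boot.
From mathcomp Require Import zify.
From Stdlib Require Import Classical.
Set Implicit Arguments. Unset Strict Implicit. Unset Printing Implicit Defensive.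

Lemma F2_in2 (A : eqType) B (P : A -> B -> Prop) l1 l2 :
  List.Forall2 P l1 l2 -> forall b, List.In b l2 -> exists2 a, a \in l1 & P a b.
Proof.
elim=> //= a b l1' l2' Pab _ IH b' [<-|/IH [a' a'in Pa']].
  by exists a; rewrite ?inE ?eqxx.
by exists a'; rewrite // inE a'in orbT.
Qed.

Lemma F2_in1 (A : eqType) B (P : A -> B -> Prop) l1 l2 :
  List.Forall2 P l1 l2 -> forall a, a \in l1 -> exists b, P a b /\ List.In b l2.
Proof.
elim=> //= a b l1' l2' Pab _ IH a'; rewrite inE => /orP [/eqP->|/IH [b' [h1 h2]]].
  by exists b; split => //; left.
by exists b'; split => //; right.
Qed.

Lemma F2_choice (A : eqType) B (P : A -> B -> Prop) (l : seq A) :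
  (forall a, a \in l -> exists b, P a b) -> exists l2, List.Forall2 P l l2.
Proof.
elim: l => [|a l IH] H; first by exists [::].
have [b Pb] := H a (mem_head _ _).
have [l2 F] : exists l2, List.Forall2 P l l2.
  by apply: IH => a' a'in; apply: H; rewrite inE a'in orbT.
by exists (b :: l2); constructor.
Qed.

Lemma fun_choice (A : eqType) B (b0 : B) (Q : A -> B -> Prop) (l : seq A) :
  (forall a, a \in l -> exists b, Q a b) -> exists g : A -> B, forall a, a \in l -> Q a (g a).
Proof.
elim: l => [|a l IH] H; first by exists (fun _ => b0).
have [b Qb] := H a (mem_head _ _).
have [g Hg] : exists g : A -> B, forall a, a \in l -> Q a (g a).
  by apply: IH => a' a'in; apply: H; rewrite inE a'in orbT.
exists (fun a' => if a' == a then b else g a') => a'; rewrite inE.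
by case: eqP => [->|_] //= /Hg.
Qed.

Lemma nat_min (P : nat -> Prop) : (exists n, P n) -> exists n, P n /\ forall m, P m -> n <= m.
Proof.
move=> [n Pn]; elim: n {-2}n (leqnn n) Pn => [|k IH] n hn Pn.
  by exists n; split => // m _; move: hn; rewrite leqn0 => /eqP->.
case: (classic (exists2 m, m < n & P m)) => [[m mn Pm]|H].
  by apply: (IH m) => //; lia.
exists n; split => // m Pm; rewrite leqNgt; apply/negP => mn; apply: H; by exists m.
Qed.

Fixpoint maxc (T : finType) (w : T -> nat) (l : seq (dtree T)) : nat :=
  match l with [::] => 0 | c :: l' => maxn (cost w c) (maxc w l') end.

Lemma costE (T : finType) (w : T -> nat) q cs : cost w (DNode q cs) = w q + maxc w cs.
Proof. by rewrite /=; congr (_ + _); elim: cs => //= c cs ->. Qed.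

Lemma maxc_ge (T : finType) (w : T -> nat) cs c : List.In c cs -> cost w c <= maxc w cs.
Proof. elim: cs => //= c' cs IH [->|/IH h]; lia. Qed.

Lemma maxc_le (T : finType) (w : T -> nat) cs B : (forall c, List.In c cs -> cost w c <= B) -> maxc w cs <= B.
Proof.
elim: cs => //= c cs IH H; rewrite geq_max H /=; last by left.
by apply: IH => c' h; apply: H; right.
Qed.

Lemma induced_sym (T : finType) (e : rel T) (A : {set T}) :
  symmetric e -> connect_sym (induced e A).
Proof.
move=> se; apply: sym_connect_sym => x y; rewrite /induced se.
by case: (e y x); case: (x \in A); case: (y \in A).
Qed.

Lemma path_inA (T : finType) (e : rel T) (A : {set T}) x p :
  path (induced e A) x p -> x \in A -> forall u, u \in x :: p -> u \in A.
Proof.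
elim: p x => [|y p IH] x /=; first by move=> _ xA u; rewrite inE => /eqP->.
move=> /andP [/and3P [_ _ yA] hp] xA u; rewrite inE => /orP [/eqP->//|].
exact: IH.
Qed.

Lemma path_induced (T : finType) (e : rel T) (A : {set T}) x p :
  path e x p -> all (mem A) (x :: p) -> path (induced e A) x p.
Proof.
elim: p x => [|y p IH] x //= /andP [exy hp] /and3P [xA yA hall].
by rewrite /induced exy xA yA /= IH //= yA.
Qed.

Lemma comp_same (T : finType) (e : rel T) (A : {set T}) u v :
  symmetric e -> connect (induced e A) u v -> component e A u = component e A v.
Proof.
move=> se huv; apply/setP => y; rewrite !inE.
by rewrite (same_connect (induced_sym A se) huv).
Qed.

Lemma comp_self (T : finType) (e : rel T) (A : {set T}) u :
  u \in A -> u \in component e A u.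
Proof. by move=> uA; rewrite inE uA connect0. Qed.

Lemma comp_sub (T : finType) (e : rel T) (A : {set T}) u :
  component e A u \subset A.
Proof. by apply/subsetP => y; rewrite inE => /andP []. Qed.

Definition connectedS (T : finType) (e : rel T) (S : {set T}) :=
  forall y z, y \in S -> z \in S -> connect (induced e S) y z.

Lemma comp_connected (T : finType) (e : rel T) (A : {set T}) x :
  symmetric e -> x \in A -> connectedS e (component e A x).
Proof.
move=> se xA; set K := component e A x.
have key : forall p u, u \in K -> path (induced e A) u p ->
    connect (induced e K) u (last u p).
  elim=> [|z p IH] u uK /=; first by rewrite connect0.
  move=> /andP [huz hp].
  have zK : z \in K.
    move: uK; rewrite !inE => /andP [uA cxu]; case/and3P: (huz) => [_ _ zA].
    by rewrite zA (connect_trans cxu) // connect1 // /induced huz.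
  apply: connect_trans (IH z zK hp); apply: connect1.
  by move: huz => /and3P [euz _ _]; rewrite /induced euz uK zK.
have hx : forall y, y \in K -> connect (induced e K) x y.
  move=> y; rewrite inE => /andP [_ /connectP [p hp ->]].
  by apply: key => //; rewrite comp_self.
move=> y z yK zK; apply: (connect_trans (y := x)); last exact: hx.
by rewrite (induced_sym K se); apply: hx.
Qed.

Lemma part2 (T : finType) (e : rel T) (w : T -> nat) (f : T -> nat * nat) :
  symmetric e -> extended_strategy e w f ->
  forall n (S : {set T}), #|S| < n -> (exists x, x \in S) -> connectedS e S ->
  exists2 D, is_dt e S D &
    forall B, (forall v, v \in S -> (f v).2 <= B) -> cost w D <= B.
Proof.
move=> se [hI hsep]; elim=> // n IH S hS [x xS] cS.
case: (arg_maxnP (fun v => (f v).2) xS) => q qS qmax.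
have qS2 : q \in S := qS.
set Cs := enum (components e (S :\ q)).
have keyb : forall C, C \in Cs -> forall v, v \in C -> (f v).2 <= (f q).1.
  move=> C; rewrite mem_enum => /imsetP [x0 x0in ->] v.
  rewrite inE => /andP [vSq _]; move: vSq; rewrite !inE => /andP [vq vS].
  rewrite leqNgt; apply/negP => hlt.
  have bvq := qmax v vS.
  have hmeet : imeet (f v) (f q).
    rewrite /imeet; have := (hI v).1; have := (hI q).1; rewrite /interval_ok; lia.
  case/connectP: (cS v q vS qS) => p hp hl.
  case: (shortenP hp) hl => p' hp' up' _ hl.
  have tp : tpath e v q p'.
    split => //; apply: sub_path hp' => a b /and3P [].
    by [].
  have [v3 v3in [g1 g2]] := hsep v q vq hmeet p' tp.
  have v3S := path_inA hp' vS v3in.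
  have := qmax v3 v3S; have := (hI v3).1; rewrite /interval_ok /igt in g1 g2 *; lia.
have hch : forall C, C \in Cs -> exists D, is_dt e C D /\
    forall B, (forall v, v \in C -> (f v).2 <= B) -> cost w D <= B.
  move=> C Cin; have := Cin; rewrite mem_enum => /imsetP [x0 x0in ->].
  have [D hD hB] : exists2 D, is_dt e (component e (S :\ q) x0) D &
    forall B, (forall v, v \in component e (S :\ q) x0 -> (f v).2 <= B) -> cost w D <= B.
    apply: IH; last exact: comp_connected.
      suff : #|component e (S :\ q) x0| < #|S| by lia.
      apply: (leq_ltn_trans (subset_leq_card (comp_sub _ _ _))); idtac.
      rewrite (cardsD1 q S) qS2 /=; lia.
    by exists x0; apply: comp_self.
  by exists D.
have [cs F2] := F2_choice hch.
exists (DNode q cs).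
  apply: (@IsDt _ _ S q cs Cs); first exact: qS.
  - exact: enum_uniq.
  - exact: set_enum.
  - by elim: F2 => [|C c Cs' cs' [h _] _ IH']; constructor.
move=> B hB; rewrite costE.
have : maxc w cs <= (f q).1.
  apply: maxc_le => c cin; have [C Cin [_ hc]] := F2_in2 F2 cin.
  by apply: hc; apply: keyb.
have := hB q qS; have := (hI q).2; have := (hI q).1; rewrite /ilen /interval_ok; lia.
Qed.

Definition P1 (T : finType) (e : rel T) (w : T -> nat) (S : {set T}) (M : nat)
  (f : T -> nat * nat) :=
  [/\ (forall v, v \in S -> [/\ interval_ok (f v), w v <= ilen (f v) & (f v).2 <= M]),
      (exists2 r, r \in S & (f r).2 = M) &
      (forall v1 v2 p, v1 \in S -> v2 \in S -> v1 != v2 -> imeet (f v1) (f v2) ->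
         tpath e v1 v2 p -> all (mem S) (v1 :: p) ->
         exists2 v3, v3 \in v1 :: p & igt (f v3) (f v1) /\ igt (f v3) (f v2))].

Lemma part1 (T : finType) (e : rel T) (w : T -> nat) :
  symmetric e -> (forall v, 0 < w v) ->
  forall n (S : {set T}) D, #|S| < n -> is_dt e S D ->
  forall M, cost w D <= M -> exists f, P1 e w S M f.
Proof.
move=> se wpos; elim=> // n IH S0 D0 hS hD.
case: hD hS => {S0 D0} S q cs Cs qS uCs eCs F2 hS M hM.
rewrite costE in hM.
set M' := M - w q.
have CsE : forall C, (C \in Cs) = (C \in components e (S :\ q)).
  by move=> C; rewrite -eCs inE.
have hch : forall C, C \in Cs -> exists g, P1 e w C M' g.
  move=> C Cin; have [c [hc cin]] := F2_in1 F2 Cin.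
  apply: (IH C c) => //.
    move: Cin; rewrite CsE => /imsetP [x0 x0in ->].
    suff : #|component e (S :\ q) x0| < #|S| by lia.
    apply: (leq_ltn_trans (subset_leq_card (comp_sub _ _ _))).
    rewrite (cardsD1 q S) qS /=; lia.
  have := maxc_ge w cin; rewrite /M'; lia.
have [g hg] := fun_choice (fun _ : T => (0, 0)) hch.
have hCv : forall v, v \in S -> v != q ->
    component e (S :\ q) v \in Cs /\ v \in component e (S :\ q) v.
  move=> v vS vq; have vSq : v \in S :\ q by rewrite !inE vq vS.
  by rewrite CsE comp_self //; split => //; apply: imset_f.
have wqM : 0 < w q /\ w q <= M by split => //; lia.
exists (fun v => if v == q then (M', M) else g (component e (S :\ q) v) v).
split.
- move=> v vS; case: eqP => [->|/eqP vq].
    rewrite /interval_ok /ilen /M' /=; split; lia.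
  have [Cin vC] := hCv v vS vq.
  have [h1 _ _] := hg _ Cin; have [h2 h3 h4] := h1 v vC.
  by split => //; rewrite /M' in h4; lia.
- by exists q; rewrite ?eqxx.
move=> v1 v2 p v1S v2S n12 hmeet tp allS.
have bnd : forall v, v \in S -> v != q ->
    interval_ok (g (component e (S :\ q) v) v) /\ (g (component e (S :\ q) v) v).2 <= M'.
  move=> v vS vq; have [Cin vC] := hCv v vS vq.
  by have [h1 _ _] := hg _ Cin; have [h2 h3 h4] := h1 v vC.
case: (eqVneq v1 q) => [v1q|v1q].
  have n2q : v2 != q by rewrite -v1q eq_sym.
  move: hmeet; rewrite v1q eqxx (negPf n2q).
  have := bnd v2 v2S n2q.
  by rewrite /imeet /interval_ok /=; lia.
case: (eqVneq v2 q) => [v2q|v2q].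
  move: hmeet; rewrite v2q eqxx (negPf v1q).
  have := bnd v1 v1S v1q.
  by rewrite /imeet /interval_ok /=; lia.
case: (boolP (q \in v1 :: p)) => [qin|qnin].
  exists q => //; rewrite eqxx /igt /=.
  by have := bnd v1 v1S v1q; have := bnd v2 v2S v2q; lia.
set C := component e (S :\ q) v1.
have allSq : all (mem (S :\ q)) (v1 :: p).
  apply/allP => u uin; have uS : u \in S := allP allS u uin.
  rewrite !inE uS andbT.
  by apply/eqP => uq; move: qnin; rewrite -uq uin.
case: tp => tpath tuniq tlast.
have pind := path_induced tpath allSq.
have hu : forall u, u \in v1 :: p -> u \in C /\ component e (S :\ q) u = C.
  move=> u uin; have cu := path_connect pind uin.
  have uSq : u \in S :\ q := allP allSq u uin.
  split; first by rewrite inE uSq cu.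
  by rewrite /C (comp_same se cu).
have fE : forall u, u \in v1 :: p ->
    (if u == q then (M', M) else g (component e (S :\ q) u) u) = g C u.
  move=> u uin; have [_ ->] := hu u uin.
  by case: eqP => // uq; move: qnin; rewrite -uq uin.
have v2in : v2 \in v1 :: p by rewrite -tlast mem_last.
have Cin : C \in Cs by have [] := hCv v1 v1S v1q.
have [_ _ hsep] := hg C Cin.
rewrite (negPf v1q) (negPf v2q) in hmeet.
rewrite (hu v2 v2in).2 in hmeet *.
have [v3 v3in hv3] := hsep v1 v2 p (hu v1 (mem_head _ _)).1 (hu v2 v2in).1 n12 hmeet
  (And3 tpath tuniq tlast) (introT allP (fun u uin => (hu u uin).1)).
by exists v3 => //; rewrite (fE v3 v3in).
Qed.

Lemma trivial_strategy (T : finType) (e : rel T) (w : T -> nat) :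
  exists f, extended_strategy e w f.
Proof.
set W := \max_(v : T) w v + 1.
have disj : forall i j : nat, i < j -> i * W + W <= j * W.
  by move=> i j ij; rewrite -mulSnr leq_mul2r ij orbT.
exists (fun v => (enum_rank v * W, enum_rank v * W + W)); split.
  move=> v; rewrite /interval_ok /ilen /=; split; first by rewrite /W; lia.
  have := leq_bigmax (F := w) v; rewrite /W; lia.
move=> v1 v2 n12 hm; exfalso; move: hm; rewrite /imeet /=.
have : (enum_rank v1 : nat) != enum_rank v2.
  by apply: contra n12 => /eqP /val_inj /enum_rank_inj ->.
case: (ltngtP (enum_rank v1) (enum_rank v2)) => // h _; have := disj _ _ h;
  move: (enum_rank v1 * W) (enum_rank v2 * W) => a b; lia.
Qed.

Theorem mainTheorem10 (T : finType) (e : rel T) (w : T -> nat) :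
  is_tree e -> (forall v, 0 < w v) ->
  (forall D, is_dt e [set: T] D ->
     exists f, extended_strategy e w f /\ fsup f = cost w D) /\
  (forall f, extended_strategy e w f ->
     exists2 D, is_dt e [set: T] D & cost w D <= fsup f) /\
  (exists n,
     is_min (fun c => exists2 D, is_dt e [set: T] D & cost w D = c) n /\
     is_min (fun s => exists2 f, extended_strategy e w f & fsup f = s) n).
Proof.
move=> [[irr se] Tpos conn acyc] wpos.
have P1' : forall D, is_dt e [set: T] D ->
    exists f, extended_strategy e w f /\ fsup f = cost w D.
  move=> D hD.
  have [f [h1 [r _ hr] h3]] := part1 se wpos (ltnSn #|[set: T]|) hD (leqnn (cost w D)).
  exists f; split.
    split => [v|v1 v2 n12 hm p tp].
      by have [a b _] := h1 v (in_setT v).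
    apply: h3 => //; try exact: in_setT.
    by apply/allP => u _; exact: in_setT.
  apply/eqP; rewrite eqn_leq; apply/andP; split.
    by apply/bigmax_leqP => v _; have [_ _ ->] := h1 v (in_setT v).
  by rewrite -hr; exact: (leq_bigmax (F := fun v => (f v).2)).
have P2' : forall f, extended_strategy e w f ->
    exists2 D, is_dt e [set: T] D & cost w D <= fsup f.
  move=> f hf; have [x _] := card_gt0P Tpos.
  have cS : connectedS e [set: T].
    move=> y z _ _; rewrite (@eq_connect _ _ e) //.
    by move=> a b; rewrite /induced !in_setT !andbT.
  have [D hD hB] := part2 se hf (ltnSn #|[set: T]|) (ex_intro _ x (in_setT x)) cS.
  exists D => //; apply: hB => v _; exact: (leq_bigmax (F := fun v => (f v).2)).
split => //; split => //.
have [f0 hf0] := trivial_strategy e w.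
have [D0 hD0 _] := P2' f0 hf0.
have [n [[D hD hc] nmin]] :=
  @nat_min (fun c => exists2 D, is_dt e [set: T] D & cost w D = c)
    (ex_intro _ (cost w D0) (ex_intro2 _ _ D0 hD0 erefl)).
exists n; split; first by split => //; exists D.
split.
  have [f [hf hfs]] := P1' D hD; by exists f; rewrite // hfs hc.
move=> m [f hf <-]; have [D1 hD1 hc1] := P2' f hf.
by apply: leq_trans (nmin _ (ex_intro2 _ _ D1 hD1 erefl)) hc1.
Qed.
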